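(* Let $\mathbf P=(P,\leq,{}',0,1)$ be an orthocomplete atomic orthomodular poset. The following are equivalent: (i) $\mathbf P$ is pseudo-orthomodular; (ii) $\mathbf P$ is a complete orthomodular lattice; (iii) the Dedekind-MacNeille completion $\mathrm{DM}(\mathbf P)$ is orthomodular.
   Context: For $M\subseteq P$, $U(M)$, $L(M)$ are the sets of upper and lower bounds; $U(a,b)=U(\{a,b\})$ etc. A poset with complementation is a bounded poset with antitone involution $'$ ($x\le y\Rightarrow y'\le x'$, $x''=x$) with $L(x,x')=\{0\}$, $U(x,x')=\{1\}$. It is orthomodular if for all $x\le y'$ the join $x\vee y$ exists, and $((x\vee y)\wedge y')\vee y= x\vee y$ whenever the expressions are defined (with $x\wedge y=(x'\vee y')'$). It is pseudo-orthomodular if $L(U(L(x,y),y'),y)=L(x,y)$ for all $x,y$. A subset $S$ is orthogonal if $s\le t'$ for all distinct $s,t\in S$; $\mathbf P$ is orthocomplete if every orthogonal subset has a join in $\mathbf P$. An atom is a minimal element of $P\setminus\{0\}$; $\mathbf P$ is atomic if every $b>0$ lies above some atom. The Dedekind-MacNeille completion $\mathrm{DM}(\mathbf P)$ is the complete lattice of subsets $B$ with $L(U(B))=B$ under inclusion, with involution $X'=L(\{u'\mid u\in X\})$; a lattice with complementation is orthomodular if $x\vee y=((x\vee y)\wedge y')\vee y$. *)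

(* Defs.v *)
Record CPoset := {
  car :> Type;
  le : car -> car -> Prop;
  cmpl : car -> car;
  zero : car;
  one : car;
  le_refl : forall x, le x x;
  le_antisym : forall x y, le x y -> le y x -> x = y;
  le_trans : forall x y z, le x y -> le y z -> le x z;
  le0 : forall x, le zero x;
  le1 : forall x, le x one;
  cmpl_antitone : forall x y, le x y -> le (cmpl y) (cmpl x);
  cmpl_invol : forall x, cmpl (cmpl x) = x;
  cmpl_L : forall x z, le z x -> le z (cmpl x) -> z = zero;
  cmpl_U : forall x z, le x z -> le (cmpl x) z -> z = one
}.

Section Defs.
Variable P : CPoset.

Definition pset := P -> Prop.
Definition set_eq (A B : pset) : Prop := forall z, A z <-> B z.
Definition pair (x y : P) : pset := fun z => z = x \/ z = y.
Definition setU (A B : pset) : pset := fun z => A z \/ B z.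
Definition setI (A B : pset) : pset := fun z => A z /\ B z.
Definition set1 (x : P) : pset := fun z => z = x.

Definition Ub (M : pset) : pset := fun u => forall x, M x -> le P x u.
Definition Lb (M : pset) : pset := fun l => forall x, M x -> le P l x.

Definition is_sup (M : pset) (s : P) : Prop :=
  Ub M s /\ forall u, Ub M u -> le P s u.
Definition is_join (x y j : P) : Prop := is_sup (pair x y) j.

(** orthomodular poset: for x <= y' the join x \/ y exists, and
    ((x \/ y) /\ y') \/ y = x \/ y whenever defined, where a /\ b = (a' \/ b')'. *)
Definition orthomodular_poset : Prop :=
  (forall x y : P, le P x (cmpl P y) -> exists j, is_join x y j) /\
  (forall x y j m k : P, le P x (cmpl P y) ->
     is_join x y j ->
     is_join (cmpl P j) (cmpl P (cmpl P y)) m -> (* (cmpl m) = j /\ y' *)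
     is_join (cmpl P m) y k ->
     k = j).

Definition pseudo_orthomodular : Prop :=
  forall x y : P,
    set_eq (Lb (setU (Ub (setU (Lb (pair x y)) (set1 (cmpl P y)))) (set1 y)))
           (Lb (pair x y)).

Definition orthogonal (S : pset) : Prop :=
  forall s t, S s -> S t -> s <> t -> le P s (cmpl P t).

Definition orthocomplete : Prop :=
  forall S : pset, orthogonal S -> exists s, is_sup S s.

Definition atom (a : P) : Prop :=
  a <> zero P /\ forall b, le P b a -> b <> zero P -> b = a.

Definition atomic : Prop :=
  forall b : P, b <> zero P -> exists a, atom a /\ le P a b.

Definition complete_lattice : Prop := forall M : pset, exists s, is_sup M s.

Definition orthomodular_lattice_law : Prop :=
  forall x y j m k : P,
    is_join x y j ->
    is_join (cmpl P j) (cmpl P (cmpl P y)) m ->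
    is_join (cmpl P m) y k ->
    k = j.

Definition complete_orthomodular_lattice : Prop :=
  complete_lattice /\ orthomodular_lattice_law.

(** Dedekind-MacNeille completion: subsets B with L(U(B)) = B, ordered by
    inclusion; join of X, Y is L(U(X u Y)), meet is intersection,
    complement X' = L({u' | u in X}). *)
Definition dm_elem (B : pset) : Prop := set_eq (Lb (Ub B)) B.
Definition dm_join (X Y : pset) : pset := Lb (Ub (setU X Y)).
Definition dm_meet (X Y : pset) : pset := setI X Y.
Definition dm_cmpl (X : pset) : pset :=
  Lb (fun v => exists u, X u /\ v = cmpl P u).

Definition dm_orthomodular : Prop :=
  forall X Y : pset, dm_elem X -> dm_elem Y ->
    set_eq (dm_join X Y) (dm_join (dm_meet (dm_join X Y) (dm_cmpl Y)) Y).

End Defs.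

(* Main.v *)
From mathcomp Require all_boot classical_sets boolp.
From Stdlib Require Import Classical.

Module ZornW.
Import all_boot classical_sets boolp.
Local Open Scope classical_set_scope.
Lemma zorn_sets (T : Type) (Q : (T -> Prop) -> Prop) :
  (forall F : (T->Prop) -> Prop, (forall X, F X -> Q X) ->
     (forall X Y, F X -> F Y -> (forall z, X z -> Y z) \/ (forall z, Y z -> X z)) ->
     Q (fun z => exists X, F X /\ X z)) ->
  exists A, Q A /\ forall B, (forall z, A z -> B z) -> Q B -> forall z, B z -> A z.
Proof.
move=> H.
have Hc : forall F : set (set T), F `<=` Q -> total_on F subset -> Q (\bigcup_(X in F) X).
  move=> F FQ Ftot.
  have := H F FQ Ftot.
  congr Q; apply: funext => z; apply: propext; split.
    by move=> [X [FX Xz]]; exists X.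
  by move=> [X FX Xz]; exists X.
have [A [QA Amax]] := @Zorn_bigcup T Q Hc.
exists A; split => // B AB QB z Bz.
apply: contrapT => nAz; apply: (Amax B) => //.
split; first exact: AB.
by move=> BA; apply: nAz; apply: BA.
Qed.
End ZornW.

Require Import Defs.


Lemma ci {P : CPoset} (x : P) : cmpl P (cmpl P x) = x.
Proof. apply cmpl_invol. Qed.

Lemma anti {P : CPoset} (x y : P) : le P x y -> le P (cmpl P y) (cmpl P x).
Proof. apply cmpl_antitone. Qed.

Lemma swap {P : CPoset} (x y : P) : le P x (cmpl P y) -> le P y (cmpl P x).
Proof. intro H. apply anti in H. rewrite ci in H. exact H. Qed.

Lemma swap2 {P : CPoset} (x y : P) : le P (cmpl P x) y -> le P (cmpl P y) x.
Proof. intro H. apply anti in H. rewrite ci in H. exact H. Qed.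

Lemma anti_rev {P : CPoset} (x y : P) : le P (cmpl P x) (cmpl P y) -> le P y x.
Proof. intro H. apply anti in H. rewrite !ci in H. exact H. Qed.

Lemma cmpl0 {P : CPoset} : cmpl P (zero P) = one P.
Proof. apply (cmpl_U P (zero P)). apply le0. apply le_refl. Qed.

Lemma lt {P : CPoset} (x y z : P) : le P x y -> le P y z -> le P x z.
Proof. apply le_trans. Qed.

Definition down {P : CPoset} (s : P) : pset P := fun z => le P z s.

Lemma core (P : CPoset) (OC : orthocomplete P) (AT : atomic P) (X : pset P)
  (Xdown : forall z w, X w -> le P z w -> X z)
  (Xsup : forall S s, (forall a, S a -> X a) -> is_sup P S s -> X s) :
  exists s, X s /\ (forall z, X z -> le P z (cmpl P s) -> z = zero P).
Proof.
  set (Q := fun A : pset P => orthogonal P A /\ forall a, A a -> atom P a /\ X a).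
  destruct (ZornW.zorn_sets P Q) as [A [[AO AA] Amax]].
  - intros F FQ Ftot. split.
    + intros s t [X1 [F1 H1]] [X2 [F2 H2]] ne.
      destruct (Ftot X1 X2 F1 F2) as [S12|S21].
      * apply (proj1 (FQ X2 F2)); auto.
      * apply (proj1 (FQ X1 F1)); auto.
    + intros a [X1 [F1 H1]]. apply (proj2 (FQ X1 F1)); auto.
  - destruct (OC A AO) as [s [sU sL]].
    exists s. split.
    + apply (Xsup A s); [intros a Ha; apply (AA a Ha) | split; assumption].
    + intros z Xz zs.
      destruct (classic (z = zero P)) as [|nz]; [assumption|exfalso].
      destruct (AT z nz) as [a [atA az]].
      assert (Xa : X a) by (apply (Xdown a z); assumption).
      assert (as' : le P a (cmpl P s)) by (apply (lt _ z); assumption).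
      assert (Aa : A a).
      { apply (Amax (fun w => A w \/ w = a)).
        - intros; left; assumption.
        - split.
          + intros u v Hu Hv ne.
            destruct Hu as [Hu|Hu]; destruct Hv as [Hv|Hv].
            * apply AO; assumption.
            * subst v. apply (lt _ s). apply sU; assumption. apply swap; assumption.
            * subst u. apply (lt _ (cmpl P s)). assumption. apply anti. apply sU; assumption.
            * subst; contradiction.
          + intros b [Hb|Hb]. apply AA; assumption. subst b. split; assumption.
        - right; reflexivity. }
      apply (proj1 atA). apply (cmpl_L P s a). apply sU; assumption. assumption.
Qed.

Lemma complete_from (P : CPoset) (OC : orthocomplete P) (AT : atomic P)
  (H : forall (M : pset P) (s : P), Lb P (Ub P M) s ->
         (forall z, Lb P (Ub P M) z -> le P z (cmpl P s) -> z = zero P) ->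
         forall z, Lb P (Ub P M) z -> le P z s) :
  complete_lattice P.
Proof.
  intro M.
  destruct (core P OC AT (Lb P (Ub P M))) as [s [Xs Hs]].
  - intros z w Xw zw u Hu. apply (lt _ w). assumption. apply Xw; assumption.
  - intros S s XS [sU sL] u Hu. apply sL. intros a Sa. apply (XS a Sa). assumption.
  - exists s. split.
    + intros x Mx. apply (H M s Xs Hs). intros u Hu. apply Hu. assumption.
    + intros u Hu. apply Xs. assumption.
Qed.

Lemma complete_from_pOM (P : CPoset) (OC : orthocomplete P) (AT : atomic P)
  (POM : pseudo_orthomodular P) : complete_lattice P.
Proof.
  apply complete_from; try assumption.
  intros M s Xs Hs z Xz.
  destruct (POM (cmpl P z) (cmpl P s) (cmpl P s)) as [H1 _].
  assert (L : Lb P (pair P (cmpl P z) (cmpl P s)) (cmpl P s)).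
  { apply H1. intros w [Hw|Hw].
    - assert (w1 : w = one P).
      { assert (Xw : Lb P (Ub P M) (cmpl P w)).
        { intros u Hu. apply swap2. apply Hw. left. intros v [Hv|Hv]; subst v.
          - apply anti. apply Xz. assumption.
          - apply anti. apply Xs. assumption. }
        assert (w0 : cmpl P w = zero P).
        { apply Hs. assumption. apply swap2. apply Hw. right. reflexivity. }
        rewrite <- (ci w), w0. apply cmpl0. }
      subst w. apply le1.
    - unfold set1 in Hw. subst w. apply le_refl. }
  apply anti_rev. apply L. left. reflexivity.
Qed.

Lemma complete_from_dm (P : CPoset) (OC : orthocomplete P) (AT : atomic P)
  (DM : dm_orthomodular P) : complete_lattice P.
Proof.
  apply complete_from; try assumption.
  intros M s Xs Hs z Xz.
  assert (UX : forall u, Ub P M u -> Ub P (Lb P (Ub P M)) u).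
  { intros u Hu x Hx. apply Hx. assumption. }
  assert (E1 : dm_elem P (Lb P (Ub P M))).
  { intro w. split.
    - intros Hw u Hu. apply Hw. apply UX. assumption.
    - intros Hw u Hu. apply Hu. assumption. }
  assert (E2 : dm_elem P (down s)).
  { intro w. split.
    - intros Hw. apply Hw. intros x Hx. exact Hx.
    - intros Hw u Hu. apply Hu. exact Hw. }
  destruct (DM _ _ E1 E2 z) as [D _].
  assert (Jz : dm_join P (Lb P (Ub P M)) (down s) z).
  { intros u Hu. apply Hu. left. exact Xz. }
  apply (D Jz). intros w [[Hw1 Hw2]|Hw].
  - assert (w0 : w = zero P).
    { apply Hs.
      - intros u Hu. apply Hw1. intros x [Hx|Hx].
        + apply Hx. assumption.
        + apply (lt _ s). exact Hx. apply Xs. assumption.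
      - apply Hw2. exists s. split. apply le_refl. reflexivity. }
    subst w. apply le0.
  - exact Hw.
Qed.

Lemma k_le_j (P : CPoset) (x y j m k : P) :
  is_join P x y j -> is_join P (cmpl P j) (cmpl P (cmpl P y)) m ->
  is_join P (cmpl P m) y k -> le P k j.
Proof.
  intros [jU jL] [mU mL] [kU kL]. apply kL. intros w [Hw|Hw]; subst w.
  - apply swap2. apply mU. left. reflexivity.
  - apply jU. right. reflexivity.
Qed.

Lemma law_from_pOM (P : CPoset) (POM : pseudo_orthomodular P) :
  orthomodular_lattice_law P.
Proof.
  intros x y j m k Hj Hm Hk.
  apply le_antisym. eapply k_le_j; eassumption.
  destruct Hj as [jU jL]. destruct Hm as [mU mL]. destruct Hk as [kU kL].
  apply anti_rev.
  destruct (POM (cmpl P j) (cmpl P y) (cmpl P k)) as [H1 _].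
  assert (L : Lb P (pair P (cmpl P j) (cmpl P y)) (cmpl P k)).
  { apply H1. intros w [Hw|Hw].
    - apply (lt _ m). apply swap2. apply kU. left. reflexivity.
      apply mL. intros v [Hv|Hv]; subst v.
      + apply Hw. left. intros v [Hv|Hv]; subst v. apply le_refl. apply anti. apply jU. right. reflexivity.
      + apply Hw. right. reflexivity.
    - unfold set1 in Hw. subst w. apply anti. apply kU. right. reflexivity. }
  apply L. left. reflexivity.
Qed.

Lemma law_from_dm (P : CPoset) (DM : dm_orthomodular P) :
  orthomodular_lattice_law P.
Proof.
  intros x y j m k Hj Hm Hk.
  apply le_antisym. eapply k_le_j; eassumption.
  destruct Hj as [jU jL]. destruct Hm as [mU mL]. destruct Hk as [kU kL].
  assert (E : forall a : P, dm_elem P (down a)).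
  { intros a w. split.
    - intros Hw. apply Hw. intros v Hv. exact Hv.
    - intros Hw u Hu. apply Hu. exact Hw. }
  destruct (DM _ _ (E x) (E y) j) as [D _].
  apply (D).
  - intros u Hu. apply jL. intros v [Hv|Hv]; subst v; apply Hu.
    left. apply le_refl. right. apply le_refl.
  - intros w [[Hw1 Hw2]|Hw].
    + apply (lt _ (cmpl P m)).
      * apply swap. apply mL. intros v [Hv|Hv]; subst v.
        -- apply anti. apply Hw1. intros v [Hv|Hv]; apply (lt _ _ _ Hv); apply jU.
           left; reflexivity. right; reflexivity.
        -- apply swap. rewrite ci. apply Hw2. exists y. split. apply le_refl. reflexivity.
      * apply kU. left. reflexivity.
    + apply (lt _ y). exact Hw. apply kU. right. reflexivity.
Qed.

Lemma pOM_from_col (P : CPoset) (C : complete_lattice P)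
  (LAW : orthomodular_lattice_law P) : pseudo_orthomodular P.
Proof.
  intros x y.
  destruct (C (Lb P (pair P x y))) as [a [aU aL]].
  assert (ax : le P a x) by (apply aL; intros v Hv; apply Hv; left; reflexivity).
  assert (ay : le P a y) by (apply aL; intros v Hv; apply Hv; right; reflexivity).
  destruct (C (pair P a (cmpl P y))) as [b Hb].
  destruct (C (pair P (cmpl P b) (cmpl P y))) as [k Hk].
  assert (Ja : is_join P (cmpl P a) (cmpl P y) (cmpl P a)).
  { split.
    - intros v [Hv|Hv]; subst v. apply le_refl. apply anti; assumption.
    - intros u Hu. apply Hu. left. reflexivity. }
  assert (Hb' : is_join P (cmpl P (cmpl P a)) (cmpl P (cmpl P (cmpl P y))) b).
  { rewrite !ci. exact Hb. }
  pose proof (LAW _ _ _ _ _ Ja Hb' Hk) as E.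
  destruct Hb as [bU bL]. destruct Hk as [kU kL].
  intro z. split.
  - intro Hz.
    assert (zy : le P z y) by (apply Hz; right; reflexivity).
    assert (zb : le P z b).
    { apply Hz. left. intros v [Hv|Hv].
      - apply (lt _ a). apply aU. exact Hv. apply bU. left. reflexivity.
      - unfold set1 in Hv. subst v. apply bU. right. reflexivity. }
    assert (za : le P z a).
    { apply anti_rev. rewrite <- E. apply kL. intros v [Hv|Hv]; subst v.
      apply anti; assumption. apply anti; assumption. }
    intros v [Hv|Hv]; subst v; apply (lt _ a); assumption.
  - intros Hz v [Hv|Hv].
    + apply Hv. left. exact Hz.
    + unfold set1 in Hv. subst v. apply Hz. right. reflexivity.
Qed.

Lemma dm_from_col (P : CPoset) (C : complete_lattice P)
  (LAW : orthomodular_lattice_law P) : dm_orthomodular P.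
Proof.
  intros X Y EX EY.
  destruct (C X) as [x [xU xL]].
  destruct (C Y) as [y [yU yL]].
  destruct (C (pair P x y)) as [j Hj].
  destruct (C (pair P (cmpl P j) (cmpl P (cmpl P y)))) as [m Hm].
  destruct (C (pair P (cmpl P m) y)) as [k Hk].
  pose proof (LAW _ _ _ _ _ Hj Hm Hk) as E.
  destruct Hj as [jU jL]. destruct Hm as [mU mL]. destruct Hk as [kU kL].
  assert (J : forall z, dm_join P X Y z <-> le P z j).
  { intro z. split.
    - intro Hz. apply Hz. intros v [Hv|Hv].
      + apply (lt _ x). apply xU; exact Hv. apply jU. left; reflexivity.
      + apply (lt _ y). apply yU; exact Hv. apply jU. right; reflexivity.
    - intros Hz u Hu. apply (lt _ j). exact Hz. apply jL. intros v [Hv|Hv]; subst v.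
      + apply xL. intros w Hw. apply Hu. left. exact Hw.
      + apply yL. intros w Hw. apply Hu. right. exact Hw. }
  intro z. split.
  - intros Hz u Hu. apply (lt _ j). exact (proj1 (J z) Hz).
    rewrite <- E. apply kL. intros v [Hv|Hv]; subst v.
    + apply Hu. left. split.
      * apply J. apply swap2. apply mU. left. reflexivity.
      * intros v [u0 [Hu0 Hv]]. subst v. apply swap. apply (lt _ y).
        apply yU. exact Hu0. apply (lt _ (cmpl P (cmpl P y))). rewrite ci; apply le_refl. rewrite (ci m). apply mU. right. reflexivity.
    + apply yL. intros w Hw. apply Hu. right. exact Hw.
  - intros Hz. apply J. apply (lt _ k). 2: rewrite E; apply le_refl.
    apply Hz. intros w [[Hw1 Hw2]|Hw].
    + apply (lt _ (cmpl P m)).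
      * apply swap. apply mL. intros v [Hv|Hv]; subst v.
        -- apply anti. exact (proj1 (J w) Hw1).
        -- rewrite ci. apply yL. intros u Hu. apply swap. apply Hw2. exists u. split. exact Hu. reflexivity.
      * apply kU. left. reflexivity.
    + apply (lt _ y). apply yU. exact Hw. apply kU. right. reflexivity.
Qed.

Theorem theorem6 (P : CPoset) :
  orthomodular_poset P -> orthocomplete P -> atomic P ->
  (pseudo_orthomodular P <-> complete_orthomodular_lattice P) /\
  (complete_orthomodular_lattice P <-> dm_orthomodular P).
Proof.
  intros _ OC AT. split; split.
  - intro H. split. apply complete_from_pOM; assumption. apply law_from_pOM; assumption.
  - intros [C L]. apply pOM_from_col; assumption.
  - intros [C L]. apply dm_from_col; assumption.
  - intro H. split. apply complete_from_dm; assumption. apply law_from_dm; assumption.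
Qed.
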